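(* Let $(E,\langle\cdot,\cdot\rangle,\rho,\circ)$ be a pre-Courant algebroid over $M$ and let $\omega\in\Gamma(\operatorname{Hom}(\wedge^2E,E))$. Define $e_1\,\tilde\circ\,e_2=e_1\circ e_2+\omega(e_1,e_2)$. Then $(E,\langle\cdot,\cdot\rangle,\rho,\tilde\circ)$ is a pre-Courant algebroid if and only if $\omega\in C^2_{\mathcal D}(E,\operatorname{Ker}(\rho))$.
   Context: A Courant vector bundle over a smooth manifold $M$ is a vector bundle $E\to M$ with a fibrewise nondegenerate symmetric bilinear form $\langle\cdot,\cdot\rangle$ and a bundle map $\rho:E\to TM$ such that $\rho\circ\rho^*=0$, where $\rho^*:T^*M\to E^*\cong E$ is the dual of $\rho$ followed by the identification $E^*\cong E$ via $\langle\cdot,\cdot\rangle$. A pre-Courant algebroid structure on it is an $\mathbb R$-bilinear operation $\circ$ on $\Gamma(E)$ such that for all $e_1,e_2,e_3\in\Gamma(E)$: (i) $\rho(e_1\circ e_2)=[\rho(e_1),\rho(e_2)]$; (ii) $\langle e_1\circ e_1,e_2\rangle=\frac12\rho(e_2)\langle e_1,e_1\rangle$; (iii) $\rho(e_1)\langle e_2,e_3\rangle=\langle e_1\circ e_2,e_3\rangle+\langle e_2,e_1\circ e_3\rangle$. Define $\mathcal D:C^\infty(M)\to\Gamma(E)$ by $\langle\mathcal Df,e\rangle=\rho(e)f$. $C^2_{\mathcal D}(E,\operatorname{Ker}(\rho))$ is the space of $C^\infty(M)$-bilinear maps $\phi:\Gamma(E)\times\Gamma(E)\to\Gamma(E)$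 such that (1) $\phi$ takes values in $\Gamma(\operatorname{Ker}\rho)$, (2) $\phi(\mathcal Df,e)=0$ for all $f\in C^\infty(M)$, $e\in\Gamma(E)$, (3) $(e_1,e_2,e_3)\mapsto\langle\phi(e_1,e_2),e_3\rangle$ is totally skew-symmetric. *)

(* Defs.v *)
(* Algebraic (section-level) model of a Courant vector bundle:
   A plays C^oo(M) (a commutative R-algebra), S plays Gamma(E) (an A-module),
   vector fields are R-linear derivations of A, the anchor rho is A-linear. *)
From HB Require Import structures.
From mathcomp Require Import all_boot all_order all_algebra.
Set Implicit Arguments. Unset Strict Implicit. Unset Printing Implicit Defensive.
Import Order.TTheory GRing.Theory Num.Theory.
Local Open Scope ring_scope.

Section CourantDefs.
Variables (R : realFieldType) (A : comAlgType R) (S : lmodType A).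

Definition is_derivation (X : A -> A) : Prop :=
  (forall (r : R) (f g : A), X (r *: f + g) = r *: X f + X g) /\
  (forall f g : A, X (f * g) = f * X g + X f * g).

Definition vf_bracket (X Y : A -> A) : A -> A := fun f => X (Y f) - Y (X f).

Definition A_bilinear (phi : S -> S -> S) : Prop :=
  forall (a : A) (e1 e2 e3 : S),
    phi (a *: e1 + e2) e3 = a *: phi e1 e3 + phi e2 e3 /\
    phi e3 (a *: e1 + e2) = a *: phi e3 e1 + phi e3 e2.

Definition R_bilinear (circ : S -> S -> S) : Prop :=
  forall (r : R) (e1 e2 e3 : S),
    circ (r%:A *: e1 + e2) e3 = r%:A *: circ e1 e3 + circ e2 e3 /\
    circ e3 (r%:A *: e1 + e2) = r%:A *: circ e3 e1 + circ e3 e2.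

(* Courant vector bundle: pairing, anchor rho, and D : C^oo(M) -> Gamma(E)
   the map defined by <D f, e> = rho(e) f (uniquely determined by
   nondegeneracy); rho o rho^* = 0 is rho (D f) = 0. *)
Definition courant_vb (pair : S -> S -> A) (rho : S -> A -> A) (D : A -> S) : Prop :=
  (forall e1 e2, pair e1 e2 = pair e2 e1) /\
  (forall (a : A) e1 e2 e3, pair (a *: e1 + e2) e3 = a * pair e1 e3 + pair e2 e3) /\
  (forall e, (forall e', pair e e' = 0) -> e = 0) /\
  (forall (a : A) e1 e2 f, rho (a *: e1 + e2) f = a * rho e1 f + rho e2 f) /\
  (forall e, is_derivation (rho e)) /\
  (forall f e, pair (D f) e = rho e f) /\
  (forall f g, rho (D f) g = 0).

Definition pre_courant (pair : S -> S -> A) (rho : S -> A -> A)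
    (circ : S -> S -> S) : Prop :=
  R_bilinear circ /\
  (forall e1 e2 f, rho (circ e1 e2) f = vf_bracket (rho e1) (rho e2) f) /\
  (forall e1 e2, pair (circ e1 e1) e2 = (2^-1 : R) *: rho e2 (pair e1 e1)) /\
  (forall e1 e2 e3,
     rho e1 (pair e2 e3) = pair (circ e1 e2) e3 + pair e2 (circ e1 e3)).

Definition wedge2_hom (omega : S -> S -> S) : Prop :=
  A_bilinear omega /\ (forall e, omega e e = 0).

Definition C2D (pair : S -> S -> A) (rho : S -> A -> A) (D : A -> S)
    (phi : S -> S -> S) : Prop :=
  A_bilinear phi /\
  (forall e1 e2 f, rho (phi e1 e2) f = 0) /\
  (forall f e, phi (D f) e = 0) /\
  (forall e1 e2 e3,
     pair (phi e1 e2) e3 = - pair (phi e2 e1) e3 /\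
     pair (phi e1 e2) e3 = - pair (phi e1 e3) e2 /\
     pair (phi e1 e2) e3 = - pair (phi e3 e2) e1).

End CourantDefs.

(* Main.v *)
Require Import Defs.
From HB Require Import structures.
From mathcomp Require Import all_boot all_order all_algebra.
From mathcomp Require Import ring.
Import Order.TTheory GRing.Theory Num.Theory.
Local Open Scope ring_scope.

Theorem lemma4p2 (R : realFieldType) (A : comAlgType R) (S : lmodType A)
    (pair : S -> S -> A) (rho : S -> A -> A) (D : A -> S)
    (circ omega : S -> S -> S) :
  courant_vb pair rho D ->
  pre_courant pair rho circ ->
  wedge2_hom omega ->
  (pre_courant pair rho (fun e1 e2 => circ e1 e2 + omega e1 e2) <->
   C2D pair rho D omega).
Proof.
move=> [psym [plin [pnd [rlin [rder [pD rD]]]]]] [cbil [crho [c2 c3]]] [obil oal].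
have padd : forall e1 e2 e3, pair (e1 + e2) e3 = pair e1 e3 + pair e2 e3.
  by move=> e1 e2 e3; have := plin 1 e1 e2 e3; rewrite scale1r mul1r.
have p0 : forall e, pair 0 e = 0.
  move=> e; apply: (addrI (pair 0 e)).
  by rewrite addr0 -padd addr0.
have pN : forall x e, pair (- x) e = - pair x e.
  move=> x e; apply: (addrI (pair x e)); by rewrite -padd !subrr p0.
have radd : forall e1 e2 f, rho (e1 + e2) f = rho e1 f + rho e2 f.
  by move=> e1 e2 f; have := rlin 1 e1 e2 f; rewrite scale1r mul1r.
have oaddl : forall e1 e2 x, omega (e1 + e2) x = omega e1 x + omega e2 x.
  by move=> e1 e2 x; have := (obil 1 e1 e2 x).1; rewrite !scale1r.
have oaddr : forall e1 e2 x, omega x (e1 + e2) = omega x e1 + omega x e2.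
  by move=> e1 e2 x; have := (obil 1 e1 e2 x).2; rewrite !scale1r.
have oskew : forall e1 e2, omega e2 e1 = - omega e1 e2.
  move=> e1 e2; have := oal (e1 + e2).
  rewrite oaddl !oaddr !oal add0r addr0 => /eqP.
  by rewrite addrC addr_eq0 => /eqP.
split.
- move=> [_ [nrho [_ n3]]].
  have orho : forall e1 e2 f, rho (omega e1 e2) f = 0.
    move=> e1 e2 f; have := nrho e1 e2 f; rewrite radd crho => H.
    by apply: (addrI (vf_bracket (rho e1) (rho e2) f)); rewrite addr0.
  have s23 : forall e1 e2 e3, pair (omega e1 e2) e3 = - pair (omega e1 e3) e2.
    move=> e1 e2 e3; have := n3 e1 e2 e3; rewrite c3.
    rewrite padd [pair e2 (_ + _)]psym padd (psym e2 (circ e1 e3)).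
    set a := pair (circ e1 e2) e3; set b := pair (circ e1 e3) e2 => H.
    have h0 : pair (omega e1 e2) e3 + pair (omega e1 e3) e2 = 0.
      by apply: (addrI (a + b)); rewrite addr0 [in RHS]H; ring.
    by apply/eqP; rewrite -addr_eq0 h0.
  have s12 : forall e1 e2 e3, pair (omega e1 e2) e3 = - pair (omega e2 e1) e3.
    by move=> e1 e2 e3; rewrite (oskew e2 e1) pN.
  split; first by [].
  split; first by [].
  split.
    move=> f e; apply: pnd => e3.
    by rewrite s12 s23 s12 psym pD orho !oppr0.
  move=> e1 e2 e3; split; first exact: s12.
  split; first exact: s23.
  by rewrite (s23 e1 e2 e3) (s12 e1 e3 e2) (s23 e3 e1 e2) opprK.
- move=> [_ [orho [_ osk]]].
  split.
    move=> r e1 e2 e3; have [h1 h2] := cbil r e1 e2 e3;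
    have [g1 g2] := obil r%:A e1 e2 e3.
    by split; rewrite ?h1 ?h2 ?g1 ?g2 scalerDr addrACA.
  split.
    by move=> e1 e2 f; rewrite radd orho addr0 crho.
  split.
    by move=> e1 e2; rewrite oal addr0 c2.
  move=> e1 e2 e3; rewrite c3 padd [pair e2 (_ + _)]psym padd
    (psym e2 (circ e1 e3)).
  have [_ [H _]] := osk e1 e2 e3; rewrite H; ring.
Qed.
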